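(* Let $(M,s)$ be an $\mathbf{S5}$-state such that every world $u\in M[S]$ is reachable from $s$, let $i$ be an agent and $\psi$ a fluent formula. Then $(M,s)\models\mathbf C(\mathbf B_i\psi\vee\mathbf B_i\neg\psi)$ iff for all $u,v\in M[S]$ with $(u,v)\in M[i]$ we have: $M[\pi](u)\models\psi$ iff $M[\pi](v)\models\psi$.
   Context: Agents $\mathcal{AG}=\{1,\dots,n\}$, fluents $\mathcal F$. Belief formulae are built from propositional (fluent) formulae over $\mathcal F$ with $\mathbf B_i$, Boolean connectives, $\mathbf E_\alpha,\mathbf C_\alpha$; $\mathbf C=\mathbf C_{\mathcal{AG}}$. Kripke structures $M$: worlds $M[S]$, interpretations $M[\pi](u)\subseteq\mathcal F$, relations $M[i]$; standard semantics ($\mathbf B_i\varphi$: $\varphi$ at all $M[i]$-successors; $\mathbf E_\alpha\varphi$: all $\mathbf B_i\varphi$, $i\in\alpha$; $\mathbf C_\alpha\varphi$: $\mathbf E_\alpha^k\varphi$ for all $k\ge0$). $(M,s)$ is an $\mathbf{S5}$-state if each $M[i]$ is an equivalence relation. $v$ is reachable from $u$ if connected to it by a finite (possibly empty) chain of pairs each in some $M[j]$. *)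

(* Defs.v *)
From Stdlib Require Import Relations.

Section Logic.
Variables (Ag F : Type).

Inductive fform : Type :=
| FAtom : F -> fform
| FTrue : fform
| FNot : fform -> fform
| FAnd : fform -> fform -> fform
| FOr : fform -> fform -> fform.

Fixpoint fsat (I : F -> Prop) (p : fform) : Prop :=
  match p with
  | FAtom f => I f
  | FTrue => True
  | FNot q => ~ fsat I q
  | FAnd q r => fsat I q /\ fsat I r
  | FOr q r => fsat I q \/ fsat I r
  end.

(* Belief formulae; groups alpha are given as predicates on agents. *)
Inductive bform : Type :=
| BFl : fform -> bform
| BNot : bform -> bform
| BAnd : bform -> bform -> bform
| BOr : bform -> bform -> bform
| BB : Ag -> bform -> bform
| BE : (Ag -> Prop) -> bform -> bform
| BC : (Ag -> Prop) -> bform -> bform.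

Record kripke : Type := Kripke {
  kS : Type;
  kpi : kS -> F -> Prop;
  krel : Ag -> kS -> kS -> Prop
}.

Fixpoint Eiter (M : kripke) (al : Ag -> Prop) (k : nat) (P : kS M -> Prop)
  (u : kS M) : Prop :=
  match k with
  | O => P u
  | S k' => forall i, al i -> forall v, krel M i u v -> Eiter M al k' P v
  end.

Fixpoint models (M : kripke) (u : kS M) (phi : bform) : Prop :=
  match phi with
  | BFl p => fsat (kpi M u) p
  | BNot q => ~ models M u q
  | BAnd q r => models M u q /\ models M u r
  | BOr q r => models M u q \/ models M u r
  | BB i q => forall v, krel M i u v -> models M v q
  | BE al q => forall i, al i -> forall v, krel M i u v -> models M v q
  | BC al q => forall k, Eiter M al k (fun v => models M v q) u
  end.

Definition BCall (phi : bform) : bform := BC (fun _ => True) phi.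

Definition S5_state (M : kripke) (s : kS M) : Prop :=
  forall i, equivalence (kS M) (krel M i).

Definition anyrel (M : kripke) (u v : kS M) : Prop := exists j, krel M j u v.

Definition reachable (M : kripke) (u v : kS M) : Prop :=
  clos_refl_trans (kS M) (anyrel M) u v.

End Logic.

Arguments FAtom {F}. Arguments FTrue {F}. Arguments FNot {F}.
Arguments FAnd {F}. Arguments FOr {F}.
Arguments BFl {Ag F}. Arguments BNot {Ag F}. Arguments BAnd {Ag F}.
Arguments BOr {Ag F}. Arguments BB {Ag F}. Arguments BE {Ag F}. Arguments BC {Ag F}.
Arguments BCall {Ag F}.
Arguments models {Ag F}. Arguments S5_state {Ag F}. Arguments reachable {Ag F}.
Arguments kS {Ag F}. Arguments kpi {Ag F}. Arguments krel {Ag F}.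

(* Main.v *)
Require Import Defs.
From Stdlib Require Import Relations Classical.

Lemma step_C (Ag F : Type) (M : kripke Ag F) (P : kS M -> Prop) x y :
  (forall k, Eiter Ag F M (fun _ => True) k P x) -> anyrel Ag F M x y ->
  forall k, Eiter Ag F M (fun _ => True) k P y.
Proof.
  intros H [j Hj] k. exact (H (S k) j I y Hj).
Qed.

Lemma reach_C (Ag F : Type) (M : kripke Ag F) (P : kS M -> Prop) x y :
  reachable M x y -> (forall k, Eiter Ag F M (fun _ => True) k P x) ->
  forall k, Eiter Ag F M (fun _ => True) k P y.
Proof.
  unfold reachable. induction 1; intros; eauto.
  eapply step_C; eauto.
Qed.

Lemma all_C (Ag F : Type) (M : kripke Ag F) (P : kS M -> Prop) :
  (forall w, P w) -> forall k w, Eiter Ag F M (fun _ => True) k P w.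
Proof.
  intros H k; induction k; simpl; auto.
Qed.

Theorem lemma9 (Ag F : Type) (M : kripke Ag F) (s : kS M)
  (HS5 : S5_state M s)
  (Hreach : forall u : kS M, reachable M s u)
  (i : Ag) (psi : fform F) :
  models M s (BCall (BOr (BB i (BFl psi)) (BB i (BFl (FNot psi)))))
  <-> (forall u v : kS M, krel M i u v ->
         (fsat F (kpi M u) psi <-> fsat F (kpi M v) psi)).
Proof.
  destruct (HS5 i) as [Hr Ht Hs].
  split.
  - intros H u v Huv. unfold BCall in H; simpl in H.
    pose proof (reach_C _ _ M _ s u (Hreach u) H 0) as Hu. simpl in Hu.
    destruct Hu as [Hu|Hu].
    + split; intros _; [apply Hu; auto| apply Hu; apply Hr].
    + pose proof (Hu u (Hr u)) as A. pose proof (Hu v Huv) as B. simpl in A, B.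
      tauto.
  - intros H. unfold BCall; simpl. intro k. apply (all_C _ _ M). intros w. simpl.
    destruct (classic (fsat F (kpi M w) psi)) as [Hw|Hw].
    + left. intros v Hv. apply (H w v Hv); auto.
    + right. intros v Hv Hp. apply Hw. apply (H w v Hv); auto.
Qed.
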